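(* For any number of features $D$, given $\pi_1=\epsilon$ small, the two positive regions $\mathbb R^D_{++}$ and $-\mathbb R^D_{++}$ are stable for EM. That is, $M(\boldsymbol\lambda)\succ\boldsymbol\lambda$ for all feasible $\boldsymbol\lambda\succ0$, and $M(\boldsymbol\lambda)\prec\boldsymbol\lambda$ for all feasible $\boldsymbol\lambda\prec0$.
   Context: Setting: a mixture of two Bernoullis on $\{0,1\}^D$. - The true distribution is $p^*=\pi_1^*B(\cdot\mid\boldsymbol\mu_1^* )+\pi_2^*B(\cdot\mid\boldsymbol\mu_2^* )$, where $B(\mathbf x\mid\boldsymbol\mu)=\prod_i\mu_i^{x_i}(1-\mu_i)^{1-x_i}$ and $\pi_1^*\in(0,1)$. - It is fitted by population EM to the model $\pi_1B(\cdot\mid\boldsymbol\mu_1)+\pi_2B(\cdot\mid\boldsymbol\mu_2)$. Notation: - $\overline{\mathbf x}=\mathbb E_{p^*}[\mathbf x]$, $S_i=\overline x_i(1-\overline x_i)$ and $\boldsymbol\mu^*=(\boldsymbol\mu_1^*-\boldsymbol\mu_2^* )/2$. - Take $\boldsymbol\mu_2=\overline{\mathbf x}$, set $\mathbf b=\boldsymbol\mu_1-\overline{\mathbf x}$ and $\lambda_i=2S_i^{-1}\mu_i^*b_i$. - The feasible domain is $\{\boldsymbol\lambda(\boldsymbol\mu_1):\boldsymbol\mu_1\in[0,1]^D\}$. - $Z_1(\boldsymbol\lambda)=\pi_1^*\prod_i(1+\pi_2^*\lambda_i)+\pi_2^*\prod_i(1-\pi_1^*\lambda_i)$. - $B_{1i}=\prod_{j\ne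 i}(1+\pi_2^*\lambda_j)$, $B_{2i}=\prod_{j\ne i}(1-\pi_1^*\lambda_j)$, and $\Lambda_i=\mu_{1i}(1-\mu_{1i})$. EM update: - In the one-cluster regime ($\pi_1$ small), the population EM update of $\boldsymbol\mu_1$ is, to leading order, the mean of the normalized distribution proportional to $p^*(\mathbf x)B(\mathbf x\mid\boldsymbol\mu_1)/B(\mathbf x\mid\overline{\mathbf x})$. - $M(\boldsymbol\lambda)$ denotes the image of this updated $\boldsymbol\mu_1$ under the affine map $\boldsymbol\mu_1\mapsto\boldsymbol\lambda$. Explicitly, $$M(\boldsymbol\lambda)_i=\lambda_i+(2S_i^{-1}\mu_i^* )^2\pi_1^*\pi_2^*\frac{\Lambda_i}{Z_1(\boldsymbol\lambda)}(B_{1i}-B_{2i}).$$ $\succ$ and $\prec$ denote strict componentwise order. Standing assumption: $\sigma_{ij}=4\pi_1^*\pi_2^*\mu_i^*\mu_j^*\ne0$ for all $i\ne j$. *)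

(* Defs.v *)
(* Mixture of two Bernoullis on {0,1}^D, one-cluster EM map. *)
From mathcomp Require Import all_boot all_order all_algebra.
Set Implicit Arguments. Unset Strict Implicit. Unset Printing Implicit Defensive.
Import Order.TTheory GRing.Theory Num.Theory.
Local Open Scope ring_scope.

Section EM.
Variables (R : realFieldType) (D : nat).
(* true parameters: pi1 = pi_1^*, pi2 = pi_2^* = 1 - pi1, m1 = mu_1^*, m2 = mu_2^* *)
Variables (pi1 : R) (m1 m2 : 'I_D -> R).

Definition pi2 : R := 1 - pi1.
Definition xbar (i : 'I_D) : R := pi1 * m1 i + pi2 * m2 i.
Definition Svar (i : 'I_D) : R := xbar i * (1 - xbar i).
Definition mustar (i : 'I_D) : R := (m1 i - m2 i) / 2.
Definition sigma (i j : 'I_D) : R := 4 * pi1 * pi2 * mustar i * mustar j.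

Definition lam (mu1 : 'I_D -> R) (i : 'I_D) : R :=
  2 * (Svar i)^-1 * mustar i * (mu1 i - xbar i).

Definition Z1 (l : 'I_D -> R) : R :=
  pi1 * \prod_(j < D) (1 + pi2 * l j) + pi2 * \prod_(j < D) (1 - pi1 * l j).
Definition B1 (l : 'I_D -> R) (i : 'I_D) : R :=
  \prod_(j < D | j != i) (1 + pi2 * l j).
Definition B2 (l : 'I_D -> R) (i : 'I_D) : R :=
  \prod_(j < D | j != i) (1 - pi1 * l j).
Definition Lam (mu1 : 'I_D -> R) (i : 'I_D) : R := mu1 i * (1 - mu1 i).

(* M(lambda) where lambda = lam mu1 (Lambda_i depends on mu1) *)
Definition Mmap (mu1 : 'I_D -> R) (i : 'I_D) : R :=
  let l := lam mu1 in
  l i + (2 * (Svar i)^-1 * mustar i) ^+ 2 * pi1 * pi2 * (Lam mu1 i / Z1 l)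
        * (B1 l i - B2 l i).
End EM.

(* Main.v *)
Require Import Defs.
From mathcomp Require Import all_boot all_order all_algebra.
From mathcomp Require Import ring lra.
Import Order.TTheory GRing.Theory Num.Theory.
Local Open Scope ring_scope.

Lemma prod_ge1 (R : realFieldType) (D : nat) (P : pred 'I_D) (F : 'I_D -> R) :
  (forall i, P i -> 1 <= F i) -> 1 <= \prod_(i < D | P i) F i.
Proof.
move=> H; apply: (big_ind (fun x => 1 <= x)) => //.
  by move=> x y hx hy; rewrite mulr_ege1.
Qed.

Lemma prod_lt1 (R : realFieldType) (D : nat) (P : pred 'I_D) (F : 'I_D -> R) j :
  (forall i, P i -> 0 <= F i <= 1) -> P j -> F j < 1 -> \prod_(i < D | P i) F i < 1.
Proof.
move=> H Pj Fj; rewrite (bigD1 j) //=.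
have h1 : \prod_(i < D | P i && (i != j)) F i <= 1.
  by apply: prodr_ile1 => i /andP [Pi _]; apply: H.
have h0 : 0 <= \prod_(i < D | P i && (i != j)) F i.
  by apply: prodr_ge0 => i /andP [Pi _]; case/andP: (H i Pi).
have := H j Pj; case/andP => a b.
nra.
Qed.

Lemma feas (R : realFieldType) (D : nat) (pi1 : R) (m1 m2 : 'I_D -> R) mu1 j :
  0 < pi1 < 1 -> 0 <= m1 j <= 1 -> 0 <= m2 j <= 1 -> 0 <= mu1 j <= 1 ->
  0 <= 1 - pi1 * lam pi1 m1 m2 mu1 j /\ 0 <= 1 + pi2 pi1 * lam pi1 m1 m2 mu1 j.
Proof.
move=> /andP[p0 p1] /andP[a0 a1] /andP[b0 b1] /andP[u0 u1].
rewrite /lam /Svar /mustar /xbar /pi2.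
set x := pi1 * m1 j + (1 - pi1) * m2 j.
have x0 : 0 <= x by rewrite /x; nra.
have x1 : x <= 1 by rewrite /x; nra.
have [S0|S0] := eqVneq (x * (1 - x)) 0.
  by rewrite S0 invr0 !mulr0 !mul0r !mulr0 subr0 addr0 ler01.
have Sp : 0 < x * (1 - x).
  by rewrite lt_neqAle eq_sym S0 /=; nra.
have e1 : pi1 * (2 * (x * (1 - x))^-1 * ((m1 j - m2 j) / 2) * (mu1 j - x))
   = (pi1 * (m1 j - m2 j) * (mu1 j - x)) / (x * (1 - x)).
  by field; have := S0; rewrite mulf_eq0 negb_or => /andP [-> ->].
have e2 : (1 - pi1) * (2 * (x * (1 - x))^-1 * ((m1 j - m2 j) / 2) * (mu1 j - x))
   = ((1 - pi1) * (m1 j - m2 j) * (mu1 j - x)) / (x * (1 - x)).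
  by field; have := S0; rewrite mulf_eq0 negb_or => /andP [-> ->].
have f1 : forall t, 1 - t / (x * (1 - x)) = (x * (1 - x) - t) / (x * (1 - x)).
  by move=> t; field; have := S0; rewrite mulf_eq0 negb_or => /andP [-> ->].
have f2 : forall t, 1 + t / (x * (1 - x)) = (x * (1 - x) + t) / (x * (1 - x)).
  by move=> t; field; have := S0; rewrite mulf_eq0 negb_or => /andP [-> ->].
rewrite e1 e2 f1 f2.
have hx1 : x - pi1 * (m1 j - m2 j) = m2 j by rewrite /x; ring.
have hx2 : 1 - x + pi1 * (m1 j - m2 j) = 1 - m2 j by rewrite /x; ring.
have hx3 : x + (1 - pi1) * (m1 j - m2 j) = m1 j by rewrite /x; ring.
have hx4 : 1 - x - (1 - pi1) * (m1 j - m2 j) = 1 - m1 j by rewrite /x; ring.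
set d := m1 j - m2 j.
have [d0|d0] := lerP 0 d.
  have h1 : 0 <= (x - pi1 * d) * (1 - x) by rewrite hx1; nra.
  have h2 : 0 <= pi1 * d * (1 - mu1 j) by apply: mulr_ge0; [apply: mulr_ge0|]; lra.
  have h3 : 0 <= x * (1 - x - (1 - pi1) * d) by rewrite hx4; nra.
  have h4 : 0 <= (1 - pi1) * d * mu1 j by apply: mulr_ge0; [apply: mulr_ge0|]; lra.
  by split; (apply: divr_ge0; last exact: ltW Sp); nra.
have h1 : 0 <= x * (1 - x + pi1 * d) by rewrite hx2; nra.
have h2 : 0 <= pi1 * (- d) * mu1 j by apply: mulr_ge0; [apply: mulr_ge0|]; lra.
have h3 : 0 <= (1 - x) * (x + (1 - pi1) * d) by rewrite hx3; nra.
have h4 : 0 <= (1 - pi1) * (- d) * (1 - mu1 j) by apply: mulr_ge0; [apply: mulr_ge0|]; lra.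
by split; (apply: divr_ge0; last exact: ltW Sp); nra.
Qed.

Theorem mainTheorem6 (R : realFieldType) (D : nat) (pi1 : R) (m1 m2 : 'I_D -> R) :
  (2 <= D)%N ->
  0 < pi1 < 1 ->
  (forall i, 0 <= m1 i <= 1) ->
  (forall i, 0 <= m2 i <= 1) ->
  (forall i j : 'I_D, i != j -> sigma pi1 m1 m2 i j != 0) ->
  forall mu1 : 'I_D -> R, (forall i, 0 < mu1 i < 1) ->
    ((forall i, 0 < lam pi1 m1 m2 mu1 i) ->
       forall i, lam pi1 m1 m2 mu1 i < Mmap pi1 m1 m2 mu1 i) /\
    ((forall i, lam pi1 m1 m2 mu1 i < 0) ->
       forall i, Mmap pi1 m1 m2 mu1 i < lam pi1 m1 m2 mu1 i).
Proof.
move=> D2 hp hm1 hm2 _ mu1 hmu.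
have hp' := hp; case/andP: hp' => p0 p1.
have pi2p : 0 < pi2 pi1 by rewrite /pi2 subr_gt0.
set l := lam pi1 m1 m2 mu1.
have hf : forall j, 0 <= 1 - pi1 * l j /\ 0 <= 1 + pi2 pi1 * l j.
  move=> j; apply: feas => //; case/andP: (hmu j) => a b.
  by rewrite (ltW a) (ltW b).
have other : forall i : 'I_D, exists j : 'I_D, j != i.
  move=> i.
  have h0 : (0 < D)%N by apply: leq_trans D2.
  have h1 : (1 < D)%N by [].
  case: (eqVneq (Ordinal h0) i) => [e|ne]; last by exists (Ordinal h0).
  by exists (Ordinal h1); rewrite -e.
have key : forall i, l i != 0 ->
   Mmap pi1 m1 m2 mu1 i = l i + ((2 * (Svar pi1 m1 m2 i)^-1 * mustar m1 m2 i) ^+ 2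
      * pi1 * pi2 pi1 * (Lam mu1 i / Z1 pi1 l)) * (B1 pi1 l i - B2 pi1 l i)
   /\ 0 < (2 * (Svar pi1 m1 m2 i)^-1 * mustar m1 m2 i) ^+ 2 * pi1 * pi2 pi1
      * Lam mu1 i.
  move=> i li; split; first by rewrite /Mmap -/l; ring.
  have c0 : 2 * (Svar pi1 m1 m2 i)^-1 * mustar m1 m2 i != 0.
    apply: contraNneq li => c0.
    by rewrite /l /lam c0 mul0r.
  have Lp : 0 < Lam mu1 i by rewrite /Lam; case/andP: (hmu i) => a b; nra.
  apply: mulr_gt0 => //; apply: mulr_gt0 => //; apply: mulr_gt0 => //.
  by rewrite exprn_even_gt0.
split.
- move=> pos i.
  have [j ji] := other i.
  have [e K] := key i (lt0r_neq0 (pos i)).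
  have hB1 : 1 <= B1 pi1 l i.
    apply: prod_ge1 => k _; have := pos k; nra.
  have hB2 : B2 pi1 l i < 1.
    apply: (@prod_lt1 _ _ _ _ j) => //.
      move=> k _; have pk := pos k; have [h1 _] := hf k; rewrite h1 /=; nra.
    have := pos j; nra.
  have Zp : 0 < Z1 pi1 l.
    rewrite /Z1; apply: ltr_pwDl.
      apply: mulr_gt0 => //; apply: (lt_le_trans ltr01); apply: prod_ge1 => k _.
      have := pos k; nra.
    apply: mulr_ge0; first exact: ltW.
    by apply: prodr_ge0 => k _; case: (hf k).
  rewrite e ltrDl mulrA; apply: mulr_gt0; last by rewrite subr_gt0; lra.
  by apply: mulr_gt0 => //; rewrite invr_gt0.
- move=> neg i.
  have [j ji] := other i.
  have [e K] := key i (ltr0_neq0 (neg i)).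
  have hB2 : 1 <= B2 pi1 l i.
    apply: prod_ge1 => k _; have := neg k; nra.
  have hB1 : B1 pi1 l i < 1.
    apply: (@prod_lt1 _ _ _ _ j) => //.
      move=> k _; have pk := neg k; have [_ h1] := hf k; rewrite h1 /=; nra.
    have := neg j; nra.
  have Zp : 0 < Z1 pi1 l.
    rewrite /Z1; apply: ltr_pwDr.
      apply: mulr_gt0 => //; apply: (lt_le_trans ltr01); apply: prod_ge1 => k _.
      have := neg k; nra.
    apply: mulr_ge0; first exact: ltW.
    by apply: prodr_ge0 => k _; case: (hf k).
  rewrite e gtrDl mulrA pmulr_rlt0; first by rewrite subr_lt0; lra.
  by apply: mulr_gt0 => //; rewrite invr_gt0.
Qed.
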